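(* Let $f,g_1,\dots,g_m,h_1,\dots,h_l\in\mathbb{R}[\mathbf{x}]$ and suppose the following holds: there is a nonnegative integer $r\le m/2$, reals $\overline R_i>\underline R_i>0$ and sets $T_i\subseteq[n]$ for $i\in[r]$, and reals $\overline R_j>0$ and sets $T_j\subseteq[n]$ for $j\in[m]\setminus[2r]$, such that (1) $(\bigcup_{i\in[r]}T_i)\cup(\bigcup_{j\in[m]\setminus[2r]}T_j)=[n]$; (2) $g_i=\|\mathbf{x}(T_i)\|_2^2-\underline R_i$ and $g_{i+r}=\overline R_i-\|\mathbf{x}(T_i)\|_2^2$ for $i\in[r]$; (3) $g_j=\overline R_j-\|\mathbf{x}(T_j)\|_2^2$ for $j\in[m]\setminus[2r]$. Then the linear program $(\mathrm{LP}_k)$ has a feasible solution for every integer $k\ge k_{\min}$, and therefore the POP of minimizing $f$ over $S(g)\cap V(h)$ has the constant trace property.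
   Context: $\mathbf{x}=(x_1,\dots,x_n)$, and for $T\subseteq[n]$, $\mathbf{x}(T)=(x_t)_{t\in T}$. $\lceil p\rceil:=\lceil\deg(p)/2\rceil$; $\mathbb{N}^n_d:=\{\alpha\in\mathbb{N}^n:|\alpha|\le d\}$; $s(d):=\binom{n+d}{n}$; $\mathbf{v}_d=(\mathbf{x}^\alpha)_{\alpha\in\mathbb{N}^n_d}$; $S(g)=\{\mathbf{x}:g_i(\mathbf{x})\ge0\ \forall i\}$, $V(h)=\{\mathbf{x}:h_j(\mathbf{x})=0\ \forall j\}$; $k_{\min}:=\max\{\lceil f\rceil,\lceil g_i\rceil,\lceil h_j\rceil\}$. $(\mathrm{LP}_k)$: minimize $\xi$ over $\xi\in\mathbb{R}$, real diagonal $\mathbf{G}_0$ of size $s(k)$, real diagonal $\mathbf{G}_i$ of size $s(k-\lceil g_i\rceil)$, vectors $\mathbf{u}_j\in\mathbb{R}^{s(2(k-\lceil h_j\rceil))}$, subject to $\mathbf{G}_i-\mathbf{I}\succeq0$ ($i\in\{0\}\cup[m]$) and the polynomial identity $\xi=\mathbf{v}_k^\top\mathbf{G}_0\mathbf{v}_k+\sum_{i\in[m]}g_i\mathbf{v}_{k-\lceil g_i\rceil}^\top\mathbf{G}_i\mathbf{v}_{k-\lceil g_i\rceil}+\sum_{j\in[l]}h_j\mathbf{v}_{2(k-\lceil h_j\rceil)}^\top\mathbf{u}_j$. Constant trace property (CTP): for every integer $k\ge k_{\min}$ there exist $a_k>0$ and a positive definite block-diagonal $\mathbf{P}_k=\mathrm{diag}(\mathbf{P}_{k,0},\dots,\mathbf{P}_{k,m})$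 (blocks of sizes $s(k),s(k-\lceil g_1\rceil),\dots,s(k-\lceil g_m\rceil)$) such that every $\mathbf{y}=(y_\alpha)_{\alpha\in\mathbb{N}^n_{2k}}$ with $\mathbf{M}_{k-\lceil h_j\rceil}(h_j\mathbf{y})=0$ ($j\in[l]$) and $y_{\mathbf{0}}=1$ satisfies $\mathrm{trace}(\mathbf{P}_k\mathbf{D}_k(\mathbf{y})\mathbf{P}_k)=a_k$, where $\mathbf{D}_k(\mathbf{y})=\mathrm{diag}(\mathbf{M}_k(\mathbf{y}),\mathbf{M}_{k-\lceil g_1\rceil}(g_1\mathbf{y}),\dots,\mathbf{M}_{k-\lceil g_m\rceil}(g_m\mathbf{y}))$, $\mathbf{M}_d(\mathbf{y})=(y_{\alpha+\beta})_{\alpha,\beta\in\mathbb{N}^n_d}$, $\mathbf{M}_d(q\mathbf{y})=(\sum_\gamma q_\gamma y_{\alpha+\beta+\gamma})_{\alpha,\beta\in\mathbb{N}^n_d}$. *)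

(* Defs.v *)
From HB Require Import structures.
From mathcomp Require Import all_boot all_order all_algebra.
From mathcomp Require Import mpoly.
Set Implicit Arguments. Unset Strict Implicit. Unset Printing Implicit Defensive.
Import Order.TTheory GRing.Theory Num.Theory.
Local Open Scope ring_scope.

Section POP.
Variables (R : rcfType) (n : nat).

(* deg p (with deg 0 := 0); msize p = 1 + total degree, 0 for p = 0 *)
Definition pdeg (p : {mpoly R[n]}) : nat := (msize p).-1.
Definition cdeg (p : {mpoly R[n]}) : nat := uphalf (pdeg p).

(* N^n_d = 'X_{1..n < d.+1};  s(d) = #N^n_d *)
Definition s (d : nat) : nat := #|{: 'X_{1..n < d.+1}}|.
(* the monomial exponent alpha indexing row/column i of a size-s(d) matrix *)
Definition mono (d : nat) (i : 'I_(s d)) : 'X_{1..n} :=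
  bmnm (@enum_val _ (pred_of_simpl predT) i).

Definition quadf (d : nat) (G : 'M[R]_(s d)) : {mpoly R[n]} :=
  \sum_(i < s d) \sum_(j < s d) (G i j)%:MP * 'X_[mono i] * 'X_[mono j].
Definition linf (d : nat) (u : 'cV[R]_(s d)) : {mpoly R[n]} :=
  \sum_(i < s d) (u i 0)%:MP * 'X_[mono i].

Definition sqnorm (T : {set 'I_n}) : {mpoly R[n]} := \sum_(t in T) 'X_t ^+ 2.

Definition locmx (d : nat) (q : {mpoly R[n]}) (y : 'X_{1..n} -> R) : 'M[R]_(s d) :=
  \matrix_(i, j) \sum_(c <- msupp q) q@_c * y (mono i + mono j + c)%MM.

End POP.
Arguments sqnorm {R n}.
Arguments quadf {R n d}.
Arguments linf {R n d}.
Arguments locmx {R n} d.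
Arguments mono {n d}.

Definition psdmx (R : rcfType) (N : nat) (A : 'M[R]_N) : Prop :=
  A^T = A /\ forall x : 'cV[R]_N, 0 <= (x^T *m A *m x) 0 0.
Definition pdmx (R : rcfType) (N : nat) (A : 'M[R]_N) : Prop :=
  A^T = A /\ forall x : 'cV[R]_N, x != 0 -> 0 < (x^T *m A *m x) 0 0.

Definition kmin (R : rcfType) (n m l : nat) (f : {mpoly R[n]})
  (g : 'I_m -> {mpoly R[n]}) (h : 'I_l -> {mpoly R[n]}) : nat :=
  maxn (cdeg f) (maxn (\max_(i < m) cdeg (g i)) (\max_(j < l) cdeg (h j))).

Definition LP_feasible (R : rcfType) (n m l : nat)
  (g : 'I_m -> {mpoly R[n]}) (h : 'I_l -> {mpoly R[n]}) (k : nat) : Prop :=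
  exists (xi : R) (G0 : 'M[R]_(s n k))
         (G : forall i : 'I_m, 'M[R]_(s n (k - cdeg (g i))))
         (u : forall j : 'I_l, 'cV[R]_(s n (2 * (k - cdeg (h j))))),
    [/\ is_diag_mx G0, psdmx (G0 - 1%:M),
        forall i, is_diag_mx (G i),
        forall i, psdmx (G i - 1%:M) &
        xi%:MP = quadf G0 + \sum_(i < m) g i * quadf (G i)
                 + \sum_(j < l) h j * linf (u j)].

(* g extended by g_0 := 1 (so that M_d(g_0 y) = M_d(y)) *)
Definition gext (R : rcfType) (n m : nat) (g : 'I_m -> {mpoly R[n]})
  (i : 'I_m.+1) : {mpoly R[n]} :=
  match unlift ord0 i with None => 1 | Some i' => g i' end.

Definition bsize (R : rcfType) (n m : nat) (g : 'I_m -> {mpoly R[n]}) (k : nat)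
  (i : 'I_m.+1) : nat := s n (k - cdeg (gext g i)).

Definition Dmx (R : rcfType) (n m : nat) (g : 'I_m -> {mpoly R[n]}) (k : nat)
  (y : 'X_{1..n} -> R) : 'M[R]_(\sum_i bsize g k i) :=
  mxdiag (fun i : 'I_m.+1 => locmx (k - cdeg (gext g i)) (gext g i) y).

Definition CTP (R : rcfType) (n m l : nat) (f : {mpoly R[n]})
  (g : 'I_m -> {mpoly R[n]}) (h : 'I_l -> {mpoly R[n]}) : Prop :=
  forall k : nat, (kmin f g h <= k)%N ->
  exists (a : R) (Pb : forall i : 'I_m.+1, 'M[R]_(bsize g k i)),
    0 < a /\ pdmx (mxdiag Pb) /\
    forall y : 'X_{1..n} -> R,
      (forall j : 'I_l, locmx (k - cdeg (h j)) (h j) y = 0) ->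
      y 0%MM = 1 ->
      \tr (mxdiag Pb *m Dmx g k y *m mxdiag Pb) = a.

(* Main.v *)
Require Import Defs.
From HB Require Import structures.
From mathcomp Require Import all_boot all_order all_algebra.
From mathcomp Require Import mpoly.
From mathcomp Require Import zify ring lra.
Import Order.TTheory GRing.Theory Num.Theory.
Local Open Scope ring_scope.
Set Implicit Arguments. Unset Strict Implicit. Unset Printing Implicit Defensive.

Section Aux.
Context (R : rcfType) (n : nat).
Implicit Types (c : 'X_{1..n} -> R).

Lemma sum_mono (V : nmodType) (D : nat) (F : 'X_{1..n} -> V) :
  \sum_(i < s n D) F (mono i) = \sum_(b : 'X_{1..n < D.+1}) F (bmnm b).
Proof.
have := @big_enum_val V 0 +%R _ (pred_of_simpl (@predT 'X_{1..n < D.+1})) (fun b => F (bmnm b)).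
move=> /esym E; rewrite /mono; etransitivity; [exact: E|].
by apply: eq_bigl.
Qed.

Definition Qp (D : nat) c : {mpoly R[n]} :=
  \sum_(b : 'X_{1..n < D.+1}) c b *: 'X_[b + b].

Definition dgm (D : nat) c : 'M[R]_(s n D) := diag_mx (\row_i c (mono i)).

Lemma quadf_dgm D c : quadf (dgm D c) = Qp D c.
Proof.
rewrite /quadf /Qp -(sum_mono D (fun b => c b *: 'X_[b + b])).
apply: eq_bigr => i _.
rewrite (bigD1 i) //= big1 ?addr0.
  by rewrite !mxE eqxx mulr1n -mulrA -mpolyXD mul_mpolyC.
by move=> j /negbTE; rewrite !mxE eq_sym => ->; rewrite mulr0n mpolyC0 !mul0r.
Qed.

Lemma coef_sumX (I : finType) (a : I -> R) (f : I -> 'X_{1..n}) g :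
  (\sum_(b : I) a b *: 'X_[f b] : {mpoly R[n]})@_g = \sum_b a b * (f b == g)%:R.
Proof. rewrite (big_morph _ (@mcoeffD _ _ g) (@mcoeff0 _ _ g)); apply: eq_bigr => b _. by rewrite mcoeffZ mcoeffX. Qed.

Lemma sum_ind (I : finType) (a : I -> R) (f : I -> 'X_{1..n}) g :
  injective f ->
  \sum_b a b * (f b == g)%:R = if [pick b | f b == g] is Some b then a b else 0.
Proof.
move=> finj; case: pickP => [b0 /eqP fb0|none].
  rewrite (bigD1 b0) //= fb0 eqxx mulr1 big1 ?addr0 // => b nb.
  have -> : (f b == g) = false.
    by apply/negbTE; apply: contra nb => /eqP; rewrite -fb0 => /finj ->.
  by rewrite mulr0.
by rewrite big1 // => b _; rewrite none mulr0.
Qed.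

Lemma mcoeff_sum (I : Type) (r : seq I) (P : pred I) (F : I -> {mpoly R[n]}) g :
  (\sum_(i <- r | P i) F i)@_g = \sum_(i <- r | P i) (F i)@_g.
Proof. by rewrite (big_morph _ (@mcoeffD _ _ g) (@mcoeff0 _ _ g)). Qed.

Lemma sqnormQ (U : {set 'I_n}) D c :
  sqnorm U * Qp D c = \sum_(t in U) \sum_(b : 'X_{1..n < D.+1})
     c b *: 'X_[(bmnm b + U_(t)) + (bmnm b + U_(t))].
Proof.
rewrite /sqnorm mulr_suml; apply: eq_bigr => t _.
rewrite /Qp mulr_sumr; apply: eq_bigr => b _.
rewrite -scalerAr expr2 -!mpolyXD; congr (_ *: 'X_[_]).
by apply/mnmP => i; rewrite !mnmDE; lia.
Qed.

Lemma gQ_coef (k0 sg : R) (U : {set 'I_n}) D c g :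
  ((k0%:MP + sg *: sqnorm U) * Qp D c)@_g =
   k0 * \sum_(b : 'X_{1..n < D.+1}) c b * ((bmnm b + bmnm b)%MM == g)%:R
   + sg * \sum_(t in U) \sum_(b : 'X_{1..n < D.+1})
        c b * (((bmnm b + U_(t)) + (bmnm b + U_(t)))%MM == g)%:R.
Proof.
rewrite mulrDl mcoeffD mul_mpolyC mcoeffZ -scalerAl mcoeffZ sqnormQ.
rewrite /Qp coef_sumX mcoeff_sum; congr (_ + _ * _).
by apply: eq_bigr => t _; rewrite coef_sumX.
Qed.

Lemma U2_inj : injective (fun t : 'I_n => (U_(t) + U_(t))%MM).
Proof.
move=> t t' /mnmP /(_ t); rewrite !mnmDE !mnm1E eqxx.
by case: eqP => // _.
Qed.

Lemma sqnorm_coef (U : {set 'I_n}) t : t \in U -> (sqnorm U : {mpoly R[n]})@_(U_(t) + U_(t)) = 1.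
Proof.
move=> tU; rewrite /sqnorm mcoeff_sum (bigD1 t) //= expr2 -mpolyXD mcoeffX eqxx.
rewrite big1 ?addr0 // => t' /andP [_ nt]; rewrite expr2 -mpolyXD mcoeffX.
by case: eqP => // /U2_inj E; rewrite E eqxx in nt.
Qed.

Lemma cdeg_g (k0 sg : R) (U : {set 'I_n}) : U != set0 -> sg != 0 ->
  cdeg (k0%:MP + sg *: sqnorm U) = 1%N.
Proof.
move=> /set0Pn [t tU] sg0; set p := _ + _.
have le3 : (msize p <= 3)%N.
  apply: (leq_trans (msizeD_le _ _)); rewrite geq_max msizeC.
  apply/andP; split; first by case: (k0 != 0).
  apply: (leq_trans (msizeZ_le _ _)); rewrite /sqnorm.
  apply: (leq_trans (msize_sum _ _ _)); apply/bigmax_leqP => t' _.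
  by rewrite expr2 -mpolyXD msizeX mdegD mdeg1.
have ge3 : (3 <= msize p)%N.
  have : (U_(t) + U_(t))%MM \in msupp p.
    rewrite mcoeff_msupp /p mcoeffD mcoeffC mcoeffZ sqnorm_coef //.
    by rewrite mnmD_eq0 mnm1_eq0 /= mulr0 add0r mulr1.
  by move/msize_mdeg_lt; rewrite mdegD mdeg1.
have E : msize p = 3%N by apply/eqP; rewrite eqn_leq le3 ge3.
by rewrite /cdeg /pdeg E.
Qed.

Lemma D2_inj (a b : 'X_{1..n}) : (a + a = b + b)%MM -> a = b.
Proof. by move=> /mnmP E; apply/mnmP => i; have := E i; rewrite !mnmDE; lia. Qed.

Lemma bD2_inj D : injective (fun b : 'X_{1..n < D} => (bmnm b + bmnm b)%MM).
Proof. by move=> b b' /D2_inj; apply: val_inj. Qed.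

Lemma bD2U_inj D t :
  injective (fun b : 'X_{1..n < D} => ((bmnm b + U_(t)) + (bmnm b + U_(t)))%MM).
Proof. by move=> b b' /D2_inj /addIm; apply: val_inj. Qed.

Lemma psd_diag N (d : 'rV[R]_N) : (forall j, 0 <= d 0 j) -> psdmx (diag_mx d).
Proof.
move=> d0; split; first exact: tr_diag_mx.
move=> x; rewrite mul_mx_diag mxE; apply: sumr_ge0 => j _; rewrite !mxE.
by rewrite mulrAC mulr_ge0 // -expr2 sqr_ge0.
Qed.

Lemma pd_diag N (d : 'rV[R]_N) : (forall j, 0 < d 0 j) -> pdmx (diag_mx d).
Proof.
move=> d0; split; first exact: tr_diag_mx.
move=> x xn0; case: (pickP (fun j => x j 0 != 0)) => [j xj|none]; last first.
  case/eqP: xn0; apply/matrixP => i j; rewrite ord1 mxE.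
  by move: (none i) => /negbFE /eqP.
rewrite mul_mx_diag mxE (bigD1 j) //= ltr_pwDl //.
  by rewrite !mxE mulrAC mulr_gt0 // -expr2 lt_def sqr_ge0 andbT sqrf_eq0.
apply: sumr_ge0 => i _; rewrite !mxE mulrAC; apply: mulr_ge0; last exact: ltW.
by rewrite -expr2 sqr_ge0.
Qed.

Lemma dgm_sub1 D c : dgm D c - 1%:M = diag_mx (\row_i (c (mono i) - 1)).
Proof.
apply/matrixP => i j; rewrite !mxE.
by case: eqP => _; rewrite ?mulr1n ?mulr0n ?subr0.
Qed.

Lemma mono_deg D (i : 'I_(s n D)) : (mdeg (mono i) <= D)%N.
Proof. exact: (valP (enum_val i)). Qed.

Section Ly.
Variable y : 'X_{1..n} -> R.
Definition Ly (p : {mpoly R[n]}) : R := \sum_(c <- msupp p) p@_c * y c.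

Lemma Ly_seq p (sq : seq 'X_{1..n}) : uniq sq -> {subset msupp p <= sq} ->
  \sum_(c <- sq) p@_c * y c = Ly p.
Proof.
move=> usq sub; rewrite (bigID (fun c : 'X_{1..n} => c \in msupp p)) /=.
rewrite [X in _ + X]big1 ?addr0; last first.
  by move=> c; rewrite -mcoeff_eq0 => /eqP ->; rewrite mul0r.
rewrite -big_filter /Ly; apply: perm_big.
apply: uniq_perm; [exact: filter_uniq | exact: msupp_uniq |].
by move=> c; rewrite mem_filter; case: (boolP (c \in msupp p)) => // /sub ->.
Qed.

Lemma Ly_add p q : Ly (p + q) = Ly p + Ly q.
Proof.
set sq := undup (msupp p ++ msupp q).
have usq : uniq sq by exact: undup_uniq.
rewrite -(@Ly_seq (p + q) sq) //; last first.
  by move=> c /msuppD_le; rewrite mem_undup.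
rewrite -(@Ly_seq p sq) //; last by move=> c cp; rewrite mem_undup mem_cat cp.
rewrite -(@Ly_seq q sq) //; last by move=> c cq; rewrite mem_undup mem_cat cq orbT.
by rewrite -big_split /=; apply: eq_bigr => c _; rewrite mcoeffD mulrDl.
Qed.

Lemma Ly0 : Ly 0 = 0.
Proof. by rewrite /Ly msupp0 big_nil. Qed.

Lemma Ly_scale a p : Ly (a *: p) = a * Ly p.
Proof.
rewrite -(@Ly_seq (a *: p) (msupp p)) ?msupp_uniq //; last exact: msuppZ_le.
by rewrite /Ly mulr_sumr; apply: eq_bigr => c _; rewrite mcoeffZ mulrA.
Qed.

Lemma Ly_sum (I : Type) (r : seq I) (P : pred I) (F : I -> {mpoly R[n]}) :
  Ly (\sum_(i <- r | P i) F i) = \sum_(i <- r | P i) Ly (F i).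
Proof. exact: (big_morph Ly Ly_add Ly0). Qed.

Lemma Ly_C a : Ly a%:MP = a * y 0%MM.
Proof.
rewrite /Ly msuppC; case: eqP => [->|_]; first by rewrite big_nil mul0r.
by rewrite big_seq1 mcoeffC eqxx mulr1.
Qed.

Lemma Ly_MX q mm : Ly (q * 'X_[mm]) = \sum_(c <- msupp q) q@_c * y (mm + c).
Proof.
rewrite /Ly (perm_big _ (msuppMX q mm)) big_map.
by apply: eq_bigr => c _; rewrite mcoeffMX.
Qed.
End Ly.

Lemma mul_mxdiag (p : nat) (p_ : 'I_p -> nat) (A B : forall i, 'M[R]_(p_ i)) :
  mxdiag A *m mxdiag B = mxdiag (fun i => A i *m B i).
Proof.
rewrite {2}/mxdiag mul_mxdiag_mxblock /mxdiag; apply/eq_mxblock => i j.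
by case: eqVneq => [<-|]; rewrite ?conform_mx_id ?mulmx0.
Qed.

Lemma tr_diag_sand N (d : 'rV[R]_N) (A : 'M[R]_N) :
  \tr (diag_mx d *m A *m diag_mx d) = \sum_j d 0 j ^+ 2 * A j j.
Proof.
rewrite /mxtrace; apply: eq_bigr => j _.
by rewrite mul_mx_diag mul_diag_mx !mxE; ring.
Qed.

End Aux.

Section Core.
Context (R : rcfType) (n m : nat) (g : 'I_m -> {mpoly R[n]}) (k : nat)
  (lo : 'I_m -> bool) (ka : 'I_m -> R) (U : 'I_m -> {set 'I_n}).

Definition sgn i : R := if lo i then 1 else -1.
Definition Wk : R := \sum_i `|ka i|.
Definition Mc : R := 1 + Wk + (m * n)%:R.
Definition cw i (a : 'X_{1..n}) : R := if lo i then 1 else Mc ^+ (k - mdeg a).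
Definition Di i := (k - cdeg (g i))%N.
Definition xi : R := 1 + \sum_i `|ka i * cw i 0%MM|.
Definition Pp : {mpoly R[n]} := xi%:MP - \sum_i g i * Qp (Di i) (cw i).
Definition aw (a : 'X_{1..n}) : R := Pp@_(a + a).

Definition Aco i (gm : 'X_{1..n}) : R :=
  \sum_(b : 'X_{1..n < (Di i).+1}) cw i b * ((bmnm b + bmnm b)%MM == gm)%:R.
Definition Bco i (gm : 'X_{1..n}) : R :=
  \sum_(t in U i) \sum_(b : 'X_{1..n < (Di i).+1})
        cw i b * (((bmnm b + U_(t)) + (bmnm b + U_(t)))%MM == gm)%:R.

Hypothesis Hg : forall i, g i = (ka i)%:MP + sgn i *: sqnorm (U i).
Hypothesis Hk : forall i, (cdeg (g i) <= k)%N.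
Hypothesis Hcov : forall t, exists i, ~~ lo i && (t \in U i).

Lemma Wk_ge0 : 0 <= Wk.
Proof. by apply: sumr_ge0 => i _; rewrite normr_ge0. Qed.

Lemma Mc_ge1 : 1 <= Mc.
Proof. by rewrite /Mc -addrA lerDl addr_ge0 ?Wk_ge0. Qed.

Lemma cw_ge1 i a : 1 <= cw i a.
Proof. by rewrite /cw; case: (lo i) => //; rewrite exprn_ege1 // Mc_ge1. Qed.

Lemma cw_le i a : (mdeg a <= k)%N -> cw i a <= Mc ^+ (k - mdeg a).
Proof. by move=> _; rewrite /cw; case: (lo i) => //; rewrite exprn_ege1 // Mc_ge1. Qed.

Lemma coef_gQ i gm : (g i * Qp (Di i) (cw i))@_gm = ka i * Aco i gm + sgn i * Bco i gm.
Proof. by rewrite Hg gQ_coef. Qed.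

Lemma Di_U i t : t \in U i -> (Di i).+1 = k.
Proof.
move=> tU; have := Hk i; rewrite /Di Hg cdeg_g.
- by move=> ?; lia.
- by apply/set0Pn; exists t.
- by rewrite /sgn; case: (lo i); rewrite ?oppr_eq0 oner_eq0.
Qed.

Lemma zero_case gm : (forall a : 'X_{1..n < k.+1}, (bmnm a + bmnm a)%MM != gm) ->
  Pp@_gm = 0.
Proof.
move=> H; rewrite /Pp mcoeffB mcoeffC mcoeff_sum.
have -> : (gm == 0%MM) = false.
  by apply/negbTE; have := H (@bm0 n k); rewrite /= addm0 eq_sym.
rewrite (_ : false%:R = 0) // mulr0 sub0r big1 ?oppr0 // => i _; rewrite coef_gQ.
have -> : Aco i gm = 0.
  rewrite /Aco big1 // => b _; case: eqP; rewrite ?mulr0 // => E.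
  have bk : (mdeg (bmnm b) < k.+1)%N.
    apply: (leq_trans (valP b)); rewrite ltnS /Di; exact: leq_subr.
  by have := H (BMultinom bk); rewrite /= E eqxx.
have -> : Bco i gm = 0.
  rewrite /Bco big1 // => t tU; rewrite big1 // => b _.
  case: eqP; rewrite ?mulr0 // => E.
  have bk : (mdeg (bmnm b + U_(t)) < k.+1)%N.
    by rewrite mdegD mdeg1 addn1 ltnS -(Di_U tU); exact: (valP b).
  by have := H (BMultinom bk); rewrite /= E eqxx.
by rewrite !mulr0 addr0.
Qed.

Lemma Pp_eq : Pp = Qp k aw.
Proof.
apply/mpolyP => gm; rewrite /Qp coef_sumX sum_ind; last exact: bD2_inj.
case: pickP => [b /eqP <- //|none].
by apply: zero_case => a; rewrite none.
Qed.

Lemma cw_ge0 i a : 0 <= cw i a.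
Proof. exact: le_trans ler01 (cw_ge1 i a). Qed.

Lemma Aco_le i a : ka i * Aco i (a + a) <= `|ka i * cw i a|.
Proof.
rewrite /Aco sum_ind; last exact: bD2_inj.
case: pickP => [b /eqP /D2_inj <-|_]; first exact: ler_norm.
by rewrite mulr0 normr_ge0.
Qed.

Lemma Bco_ge0 i gm : 0 <= Bco i gm.
Proof.
apply: sumr_ge0 => t _; apply: sumr_ge0 => b _.
by apply: mulr_ge0; [exact: cw_ge0 | exact: ler0n].
Qed.

Lemma Bco_le_n i gm : lo i -> Bco i gm <= n%:R.
Proof.
move=> li; apply: (@le_trans _ _ (\sum_(t in U i) (1 : R))).
  apply: ler_sum => t _; rewrite sum_ind; last exact: bD2U_inj.
  by case: pickP => [b _|_] //; rewrite /cw li.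
rewrite sumr_const -[1 *+ _]/(_%:R) ler_nat.
by apply: (leq_trans (max_card _)); rewrite card_ord.
Qed.

Lemma Bco_ge_cov i t (a : 'X_{1..n}) : ~~ lo i -> t \in U i -> (0 < a t)%N -> (mdeg a <= k)%N ->
  Mc ^+ (k - mdeg a).+1 <= Bco i (a + a).
Proof.
move=> nli tU at0 ak.
have le1 : (U_(t) <= a)%MM.
  by apply/mnm_lepP => j; rewrite mnm1E; case: eqP => // <-.
have Ea := submK le1.
have dE : mdeg a = (mdeg (a - U_(t)) + 1)%N by rewrite -{1}Ea mdegD mdeg1.
have bk : (mdeg (a - U_(t)) < (Di i).+1)%N by rewrite (Di_U tU); lia.
rewrite /Bco (bigD1 t) //= -[X in X <= _]addr0 lerD ?sumr_ge0 //; last first.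
  move=> t' _; apply: sumr_ge0 => b _.
  by apply: mulr_ge0; [exact: cw_ge0 | exact: ler0n].
rewrite (bigD1 (BMultinom bk)) //= -[X in X <= _]addr0 lerD ?sumr_ge0 //; last first.
  move=> b _; by apply: mulr_ge0; [exact: cw_ge0 | exact: ler0n].
rewrite Ea eqxx mulr1 /cw (negbTE nli).
have -> : (k - mdeg (a - U_(t)))%N = (k - mdeg a).+1 by lia.
by [].
Qed.

Lemma Bco0 i : Bco i 0%MM = 0.
Proof.
rewrite /Bco big1 // => t _; rewrite big1 // => b _.
by rewrite mnmD_eq0 andbb mnmD_eq0 mnm1_eq0 andbF mulr0.
Qed.

Lemma aw_ge1 a : (mdeg a <= k)%N -> 1 <= aw a.
Proof.
move=> ak; rewrite /aw /Pp mcoeffB mcoeffC mcoeff_sum.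
under eq_bigr do rewrite coef_gQ.
case: (eqVneq a 0%MM) => [-> | a0].
  rewrite addm0 eqxx mulr1.
  under eq_bigr do rewrite Bco0 mulr0 addr0.
  have : \sum_(i < m) ka i * Aco i 0%MM <= \sum_i `|ka i * cw i 0%MM|.
    by apply: ler_sum => i _; have := Aco_le i 0%MM; rewrite addm0.
  by rewrite /xi -addrA lerDl subr_ge0.
have -> : (a + a == 0)%MM = false by rewrite mnmD_eq0 andbb (negbTE a0).
rewrite (_ : false%:R = 0) // mulr0 sub0r.
have [t0 at0] : exists t, (0 < a t)%N.
  case: (pickP (fun t => 0 < a t)%N) => [t ? | none]; first by exists t.
  case/eqP: a0; apply/mnmP => t; rewrite mnm0E; move: (none t); lia.
have [i0 /andP [nli0 tU0]] := Hcov t0.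
set X := Mc ^+ (k - mdeg a).
have X1 : 1 <= X by rewrite exprn_ege1 // Mc_ge1.
pose C i := if lo i then 0 else Bco i (a + a).
have C0 : forall i, 0 <= C i by move=> i; rewrite /C; case: (lo i) => //; exact: Bco_ge0.
have le1 : \sum_i (ka i * Aco i (a + a) + sgn i * Bco i (a + a)) <=
           \sum_(i < m) (`|ka i| * X + n%:R - C i).
  apply: ler_sum => i _.
  have h1 : ka i * Aco i (a + a) <= `|ka i| * X.
    apply: le_trans (Aco_le i a) _; rewrite normrM (ger0_norm (cw_ge0 i a)).
    by apply: ler_wpM2l => //; exact: cw_le.
  have n0 : 0 <= n%:R :> R by exact: ler0n.
  rewrite /C /sgn; case: (boolP (lo i)) => li.
    by have := Bco_le_n (a + a) li; lra.
  by lra.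
have E : \sum_(i < m) (`|ka i| * X + n%:R - C i) =
         Wk * X + (m * n)%:R - \sum_i C i.
  rewrite big_split /= big_split /= sumrN sumr_const card_ord -mulr_suml.
  by rewrite natrM mulr_natl.
have le2 : C i0 <= \sum_i C i.
  by rewrite (bigD1 i0) //= lerDl sumr_ge0.
have le3 : Mc * X <= C i0.
  rewrite /C (negbTE nli0) /X -exprS. exact: (Bco_ge_cov nli0 tU0 at0 ak).
have mn0 : 0 <= (m * n)%:R :> R by exact: ler0n.
have W0 := Wk_ge0.
rewrite /Mc in le3.
nra.
Qed.

Lemma xi_ge1 : 1 <= xi.
Proof. by rewrite /xi lerDl sumr_ge0 // => i _; rewrite normr_ge0. Qed.

Lemma ident : xi%:MP = Qp k aw + \sum_i g i * Qp (Di i) (cw i).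
Proof. by rewrite -Pp_eq /Pp subrK. Qed.

Lemma LPf (l : nat) (h : 'I_l -> {mpoly R[n]}) : LP_feasible g h k.
Proof.
exists xi, (dgm k aw), (fun i => dgm (Di i) (cw i)), (fun j => 0).
split.
- exact: diag_mx_is_diag.
- rewrite dgm_sub1; apply: psd_diag => j; rewrite mxE subr_ge0.
  by apply: aw_ge1; exact: mono_deg.
- by move=> i; exact: diag_mx_is_diag.
- by move=> i; rewrite dgm_sub1; apply: psd_diag => j; rewrite mxE subr_ge0; exact: cw_ge1.
- rewrite quadf_dgm ident; under [in RHS]eq_bigr do rewrite quadf_dgm.
  rewrite [X in _ = _ + X]big1 ?addr0 // => j _.
  by rewrite /linf big1 ?mulr0 // => i _; rewrite mxE mpolyC0 !mul0r.
Qed.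

Definition ww (i : 'I_m.+1) : 'X_{1..n} -> R :=
  match unlift ord0 i with None => aw | Some i' => cw i' end.

Lemma ww_ge1 i (j : 'I_(bsize g k i)) : 1 <= ww i (mono j).
Proof.
rewrite /ww; case: unlift => [i'|]; first exact: cw_ge1.
by apply: aw_ge1; exact: leq_trans (mono_deg j) (leq_subr _ _).
Qed.

Lemma block_tr (D : nat) (w : 'X_{1..n} -> R) (q : {mpoly R[n]}) y :
  (forall j : 'I_(s n D), 0 <= w (mono j)) ->
  \tr (dgm D (fun a => Num.sqrt (w a)) *m locmx D q y *m dgm D (fun a => Num.sqrt (w a)))
  = Ly y (q * Qp D w).
Proof.
move=> w0; rewrite tr_diag_sand /Qp mulr_sumr Ly_sum.
under eq_bigr do rewrite mxE sqr_sqrtr ?w0 // mxE.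
rewrite (sum_mono D (fun b => w b * \sum_(c <- msupp q) q@_c * y (b + b + c)%MM)).
apply: eq_bigr => b _.
by rewrite -scalerAr Ly_scale Ly_MX.
Qed.

Lemma cdeg1 : cdeg (1 : {mpoly R[n]}) = 0%N.
Proof. by rewrite /cdeg /pdeg msize1. Qed.

Lemma CTPk (l : nat) (h : 'I_l -> {mpoly R[n]}) :
  exists (a : R) (Pb : forall i : 'I_m.+1, 'M[R]_(bsize g k i)),
    0 < a /\ pdmx (mxdiag Pb) /\
    forall y : 'X_{1..n} -> R,
      (forall j : 'I_l, locmx (k - cdeg (h j)) (h j) y = 0) ->
      y 0%MM = 1 ->
      \tr (mxdiag Pb *m Dmx g k y *m mxdiag Pb) = a.
Proof.
exists xi, (fun i => dgm (k - cdeg (gext g i)) (fun a => Num.sqrt (ww i a))).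
split; first exact: lt_le_trans ltr01 xi_ge1.
split.
  rewrite /dgm -diag_mxrow; apply: pd_diag => j; rewrite !mxE sqrtr_gt0.
  exact: lt_le_trans ltr01 (ww_ge1 _).
move=> y _ y0.
rewrite /Dmx !mul_mxdiag mxtrace_mxdiag.
rewrite (eq_bigr (fun i => Ly y (gext g i * Qp (k - cdeg (gext g i)) (ww i)))); last first.
  move=> i _; apply: block_tr => j; exact: le_trans ler01 (ww_ge1 _).
rewrite -Ly_sum big_ord_recl.
rewrite /gext /ww unlift_none cdeg1 subn0.
under eq_bigr do rewrite liftK.
by rewrite mul1r -ident Ly_C y0 mulr1.
Qed.

End Core.

Theorem proposition1 (R : rcfType) (n m l : nat) (f : {mpoly R[n]})
  (g : 'I_m -> {mpoly R[n]}) (h : 'I_l -> {mpoly R[n]})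
  (r : nat) (Rlo Rhi : nat -> R) (T : nat -> {set 'I_n}) :
  (2 * r <= m)%N ->
  (forall i : nat, (i < r)%N -> 0 < Rlo i /\ Rlo i < Rhi i) ->
  (forall j : nat, (2 * r <= j < m)%N -> 0 < Rhi j) ->
  \bigcup_(i < m | (i < r)%N || (2 * r <= i)%N) (T i : {set 'I_n}) = [set: 'I_n] ->
  (forall i : 'I_m, (i < r)%N -> g i = sqnorm (T i) - (Rlo i)%:MP) ->
  (forall i : 'I_m, (r <= i < 2 * r)%N ->
     g i = (Rhi (i - r)%N)%:MP - sqnorm (T (i - r)%N)) ->
  (forall j : 'I_m, (2 * r <= j)%N -> g j = (Rhi j)%:MP - sqnorm (T j)) ->
  (forall k : nat, (kmin f g h <= k)%N -> LP_feasible g h k)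
  /\ CTP f g h.
Proof.
move=> r2m _ _ cov Hlo Hmid Hup.
pose lo (i : 'I_m) := (i < r)%N.
pose ka (i : 'I_m) : R :=
  if (i < r)%N then - Rlo i else if (i < 2 * r)%N then Rhi (i - r)%N else Rhi i.
pose U (i : 'I_m) : {set 'I_n} :=
  if (i < r)%N then T i else if (i < 2 * r)%N then T (i - r)%N else T i.
have Hg : forall i, g i = (ka i)%:MP + sgn R lo i *: sqnorm (U i).
  move=> i; rewrite /ka /U /sgn /lo.
  case: (ltnP i r) => ir.
    by rewrite Hlo // scale1r mpolyCN addrC.
  case: (ltnP i (2 * r)) => i2r.
    by rewrite Hmid ?ir ?i2r // scaleN1r.
  by rewrite Hup // scaleN1r.
have Hcov : forall t, exists i, ~~ lo i && (t \in U i).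
  move=> t; have : t \in [set: 'I_n] by rewrite inE.
  rewrite -cov => /bigcupP [i /orP [ir|i2r] tT].
    have ilt : (i + r < m)%N by lia.
    exists (Ordinal ilt); rewrite /lo /U /=.
    have -> : (i + r < r)%N = false by lia.
    have -> : (i + r < 2 * r)%N = true by lia.
    by rewrite addnK tT.
  exists i; rewrite /lo /U.
  have -> : (i < r)%N = false by lia.
  have -> : (i < 2 * r)%N = false by lia.
  by rewrite tT.
have Hk : forall k, (kmin f g h <= k)%N -> forall i, (cdeg (g i) <= k)%N.
  move=> k kk i; apply: leq_trans kk; rewrite /kmin.
  apply: leq_trans (@leq_bigmax _ (fun i => cdeg (g i)) i) _; rewrite leq_max; apply/orP; right.
  by rewrite leq_max leqnn.
split => k kk.
  exact: (LPf Hg (Hk k kk) Hcov h).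
exact: (CTPk Hg (Hk k kk) Hcov h).
Qed.
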